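(* Let $n$ be a positive integer, $q=2^n$, and $A,B,\delta\in\mathbb{F}_q$ with $A\neq0$ and $\frac{B^2}{A^2}+\frac{B}{A}+\delta\neq0$. Let $\mathcal{S}=\sum_{x\in\mathbb{F}_q}(-1)^{\mathrm{Tr}_1^n\left(\frac{Ax+B}{x^2+x+\delta}\right)}$ and let $C=(AB+A^2\delta)^{1/2}$ (the unique square root in $\mathbb{F}_q$). Then: (1) if $\mathrm{Tr}_1^n(\delta)=1$, $\mathcal{S}=(-1)^{\mathrm{Tr}_1^n(A)}+(-1)^{\mathrm{Tr}_1^n(\frac{B+C}{A})}-\mathcal{K}_n(B+C)(-1)^{\mathrm{Tr}_1^n(A)}$; (2) if $\mathrm{Tr}_1^n(\delta)=0$, $\mathcal{S}=-(-1)^{\mathrm{Tr}_1^n(A)}-(-1)^{\mathrm{Tr}_1^n(\frac{B+C}{A})}+\mathcal{K}_n(B+C)(-1)^{\mathrm{Tr}_1^n(A)}+2$.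
   Context: $\mathrm{Tr}_1^n$ is the absolute trace of $\mathbb{F}_{2^n}$. Division by zero uses the convention $\frac10=0$ (in particular the summand is $(-1)^0=1$ when $x^2+x+\delta=0$). The binary Kloosterman sum is $\mathcal{K}_n(a)=\sum_{x\in\mathbb{F}_{2^n}}(-1)^{\mathrm{Tr}_1^n(\frac1x+ax)}$. *)

(* Defs.v *)
From HB Require Import structures.
From mathcomp Require Import all_boot all_order all_algebra all_field.
Set Implicit Arguments. Unset Strict Implicit. Unset Printing Implicit Defensive.
Import GRing.Theory.
Local Open Scope ring_scope.

Definition abstr (F : finFieldType) (n : nat) (x : F) : F :=
  \sum_(i < n) x ^+ (2 ^ i).

(* (-1)^{Tr(x)} as an integer: 1 if Tr x = 0, -1 otherwise (Tr x is 0 or 1). *)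
Definition chi (F : finFieldType) (n : nat) (x : F) : int :=
  if abstr n x == 0 then 1 else -1.

(* Binary Kloosterman sum K_n(a) = sum_x (-1)^{Tr(1/x + a x)}, with 1/0 = 0
   (MathComp's inverse satisfies 0^-1 = 0). *)
Definition kloosterman (F : finFieldType) (n : nat) (a : F) : int :=
  \sum_(x : F) chi n (x^-1 + a * x).

(* Main.v *)
Require Import Defs.
From HB Require Import structures.
From mathcomp Require Import all_boot all_order all_algebra all_field.
From mathcomp Require Import ring zify.
Import Order.TTheory GRing.Theory Num.Theory.
Local Open Scope ring_scope.
Set Implicit Arguments. Unset Strict Implicit.

Lemma sqrD2 (F : finFieldType) (h : 2 \in [pchar F]) (x y : F) :
  (x + y) ^+ 2 = x ^+ 2 + y ^+ 2.
Proof. by rewrite sqrrD -mulr_natr (pcharf0 h) mulr0 addr0. Qed.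

Lemma frobD (F : finFieldType) (h : 2 \in [pchar F]) (x y : F) i :
  (x + y) ^+ (2 ^ i) = x ^+ (2 ^ i) + y ^+ (2 ^ i).
Proof.
elim: i => [|i IH]; first by rewrite !expr1.
by rewrite expnS mulnC !exprM IH sqrD2.
Qed.

Lemma abstrD (F : finFieldType) (h : 2 \in [pchar F]) n (x y : F) :
  abstr n (x + y) = abstr n x + abstr n y.
Proof. by rewrite /abstr -big_split; apply: eq_bigr => i _; apply: frobD. Qed.

Lemma abstr_sqr (F : finFieldType) n (hF : #|F| = (2 ^ n)%N) (x : F) :
  abstr n (x ^+ 2) = abstr n x.
Proof.
rewrite /abstr; case: n hF => [|m] hF; first by rewrite !big_ord0.
rewrite big_ord_recr big_ord_recl /= -exprM -expnS -hF expf_card addrC.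
by congr (_ + _); apply: eq_bigr => i _; rewrite -exprM -expnS.
Qed.

Lemma abstr_sqr2 (F : finFieldType) (h : 2 \in [pchar F]) n (x : F) :
  abstr n (x ^+ 2) = (abstr n x) ^+ 2.
Proof.
rewrite /abstr -[X in _ = X](pFrobenius_autE h) rmorph_sum; apply: eq_bigr => i _.
rewrite /= -exprM mulnC exprM; by [].
Qed.

Lemma abstr01 (F : finFieldType) (h : 2 \in [pchar F]) n (hF : #|F| = (2 ^ n)%N) (x : F) :
  abstr n x = 0 \/ abstr n x = 1.
Proof.
have : abstr n x * (abstr n x - 1) = 0.
  by rewrite mulrBr mulr1 -expr2 -abstr_sqr2 // abstr_sqr // subrr.
by move/eqP; rewrite mulf_eq0 subr_eq0 => /orP[/eqP|/eqP]; [left|right].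
Qed.

Lemma abstr0 (F : finFieldType) n : abstr n (0 : F) = 0.
Proof. by rewrite /abstr big1 // => i _; rewrite expr0n expn_eq0. Qed.

Lemma chi0 (F : finFieldType) n : chi n (0 : F) = 1.
Proof. by rewrite /chi abstr0 eqxx. Qed.

Lemma chiD (F : finFieldType) (h : 2 \in [pchar F]) n (hF : #|F| = (2 ^ n)%N) (x y : F) :
  chi n (x + y) = chi n x * chi n y.
Proof.
rewrite /chi abstrD //.
have o1 : (1 : F) != 0 := oner_neq0 F.
case: (abstr01 h hF x) => ->; case: (abstr01 h hF y) => ->;
  rewrite ?addr0 ?add0r ?eqxx ?(negbTE o1) ?addrr_pchar2 ?eqxx //.
Qed.

Lemma chi_sqr (F : finFieldType) n (hF : #|F| = (2 ^ n)%N) (x : F) :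
  chi n (x ^+ 2) = chi n x.
Proof. by rewrite /chi abstr_sqr. Qed.

Lemma chi2 (F : finFieldType) n (x : F) : chi n x * chi n x = 1.
Proof. by rewrite /chi; case: ifP. Qed.

Lemma chi_abs1 (F : finFieldType) n (x : F) : abstr n x = 1 -> chi n x = -1.
Proof. by rewrite /chi => ->; rewrite oner_eq0. Qed.

Lemma chi_abs0 (F : finFieldType) n (x : F) : abstr n x = 0 -> chi n x = 1.
Proof. by rewrite /chi => ->; rewrite eqxx. Qed.

Lemma abstr_exists (F : finFieldType) n (hn : (0 < n)%N) (hF : #|F| = (2 ^ n)%N) :
  exists a : F, abstr n a != 0.
Proof.
case: (boolP [exists a : F, abstr n a != 0]) => [/existsP//|/existsPn H].
exfalso.
pose p : {poly F} := \sum_(i < n) 'X^(2 ^ i).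
have hp0 : p != 0.
  apply/eqP => hp.
  have := congr1 (fun q : {poly F} => q`_1) hp.
  rewrite coef0 /p coef_sum; case: n hn {hF H p hp} => [//|m _].
  rewrite big_ord_recl /= coefXn eqxx big1 ?addr0; first by move/eqP; rewrite oner_eq0.
  move=> i _.
  by rewrite coefXn expnS; case: (2 ^ i)%N => [|k]; rewrite ?muln0 // mulnS.
have hsz : (size p <= (2 ^ n.-1).+1)%N.
  apply: (leq_trans (size_sum _ _ _)); apply/bigmax_leqP => i _.
  rewrite size_polyXn ltnS leq_exp2l //; case: n hn {hF H p hp0} i => [//|m _ i].
  by rewrite -ltnS.
have := max_poly_roots hp0 _ (enum_uniq F).
have -> : all (root p) (enum F).
  apply/allP => x _; rewrite /root /p horner_sum.
  under eq_bigr do rewrite hornerXn.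
  by have := H x; rewrite negbK.
move=> /(_ isT); rewrite -cardE hF => /leq_trans /(_ hsz).
case: n hn {hF H p hp0 hsz} => [//|m _ /=].
rewrite expnS ltnS.
have : (0 < 2 ^ m)%N by rewrite expn_gt0.
move: (2 ^ m)%N => k; lia.
Qed.

Lemma sum_chi (F : finFieldType) (h : 2 \in [pchar F]) n (hn : (0 < n)%N)
  (hF : #|F| = (2 ^ n)%N) : \sum_(x : F) chi n x = 0.
Proof.
have [a ha] := abstr_exists hn hF.
have ca : chi n a = -1 by rewrite /chi (negbTE ha).
have e : \sum_(x : F) chi n x = \sum_(x : F) chi n x * chi n a.
  rewrite (reindex_inj (addIr a)) /=; apply: eq_bigr => x _; exact: chiD.
move: e; rewrite -mulr_suml ca mulrN1.
move: (\sum_(x : F) chi n x) => s; lia.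
Qed.

Lemma sum_ind (F : finFieldType) (c : F) : \sum_(t : F) ((t == c)%:R : int) = 1.
Proof. by rewrite (bigD1 c) //= eqxx big1 ?addr0 // => t /negbTE ->. Qed.

Lemma sum_ind2 (F : finFieldType) (c : F) : \sum_(t : F) ((c == t)%:R : int) = 1.
Proof. by rewrite -[RHS](sum_ind c); apply: eq_bigr => t _; rewrite eq_sym. Qed.

Lemma fiber (F : finFieldType) (g : F -> int) (f : F -> F) :
  \sum_(x : F) g (f x) = \sum_(y : F) g y * \sum_(x : F) ((f x == y)%:R : int).
Proof.
under [RHS]eq_bigr do rewrite mulr_sumr.
rewrite exchange_big /=; apply: eq_bigr => x _.
rewrite (bigD1 (f x)) //= eqxx mulr1 big1 ?addr0 // => y /negbTE.
by rewrite eq_sym => ->; rewrite mulr0.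
Qed.

Definition Nsol (F : finFieldType) (e : F) : int :=
  \sum_(t : F) ((t ^+ 2 + t == e)%:R : int).

Lemma Nsol_val (F : finFieldType) (h : 2 \in [pchar F]) n (hn : (0 < n)%N)
  (hF : #|F| = (2 ^ n)%N) (e : F) : Nsol e = 1 + chi n e.
Proof.
suff : 1 + chi n e - Nsol e = 0 by move/eqP; rewrite subr_eq0 => /eqP.
apply: (@psumr_eq0P _ F predT (fun e => 1 + chi n e - Nsol e) _ _ e isT); clear e.
  move=> e _; rewrite subr_ge0.
  case: (abstr01 h hF e) => he.
    rewrite (chi_abs0 he).
    case: (boolP [exists t0 : F, t0 ^+ 2 + t0 == e]) => [/existsP [t0 /eqP ht0]|/existsPn H].
      apply: (le_trans (y := \sum_(t : F) ((t == t0)%:R + (t == t0 + 1)%:R : int))).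
        apply: ler_sum => t _.
        case: (boolP (t ^+ 2 + t == e)) => [/eqP hte|]; last first.
          by move=> _; rewrite addr_ge0.
        have : (t + t0) * (t + t0 + 1) = 0.
          have -> : (t + t0) * (t + t0 + 1) = (t ^+ 2 + t) + (t0 ^+ 2 + t0) + 2%:R * (t * t0)
            by ring.
          by rewrite (pcharf0 h) mul0r addr0 hte -ht0 addrr_pchar2.
        move/eqP; rewrite mulf_eq0 => /orP[] /eqP hz.
          have -> : t = t0 by rewrite -[t](addrK_pchar2 h t0) hz add0r.
          by rewrite eqxx lerDl.
        have -> : t = t0 + 1 by rewrite -[t](addrK_pchar2 h (t0 + 1)) (addrA t t0 1) hz add0r.
        by rewrite eqxx lerDr.
      by rewrite big_split /= !sum_ind.
    rewrite /Nsol big1 // => t _; by rewrite (negbTE (H t)).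
  rewrite (chi_abs1 he) subrr /Nsol big1 // => t _.
  case: eqP => // hte; move: he; rewrite -hte abstrD // abstr_sqr // addrr_pchar2 //.
  by move/eqP; rewrite eq_sym oner_eq0.
rewrite !sumrB big_split /= sumr_const sum_chi // addr0 /Nsol exchange_big /=.
under eq_bigr do rewrite sum_ind2.
by rewrite sumr_const subrr.
Qed.

Lemma kl (F : finFieldType) (h : 2 \in [pchar F]) n (hn : (0 < n)%N)
  (hF : #|F| = (2 ^ n)%N) (c : F) :
  \sum_(z : F) chi n (z + c * z^-1) = kloosterman n c.
Proof.
rewrite /kloosterman; have [->|c0] := eqVneq c 0.
  under eq_bigr do rewrite mul0r addr0.
  under [RHS]eq_bigr do rewrite mul0r addr0.
  rewrite sum_chi // (reindex_inj (@invr_inj F)) /=.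
  by under eq_bigr do rewrite invrK; rewrite sum_chi.
rewrite (reindex_inj (mulfI c0)) /=; apply: eq_bigr => x _.
by rewrite invfM mulrA mulfV // mul1r addrC.
Qed.

Lemma cnt_eq (F : finFieldType) (h : 2 \in [pchar F]) (A B d y x : F) :
  A != 0 -> B ^+ 2 / A ^+ 2 + B / A + d != 0 -> y != 0 ->
  ((A * x + B) / (x ^+ 2 + x + d) == y) =
  (y * x ^+ 2 + (y + A) * x + (y * d + B) == 0).
Proof.
move=> hA hD hy.
have -> : y * x ^+ 2 + (y + A) * x + (y * d + B) = y * (x ^+ 2 + x + d) + (A * x + B)
  by ring.
case: (eqVneq (x ^+ 2 + x + d) 0) => hx.
  rewrite hx invr0 !mulr0 add0r eq_sym (negbTE hy); apply/esym/negbTE.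
  apply/negP => /eqP hab; move/negP: hD; apply; apply/eqP.
  have hAx : A * x = B by rewrite -(oppr_pchar2 h B); apply/eqP; rewrite -addr_eq0 hab.
  have hx' : B / A = x by rewrite -hAx mulrAC mulfV // mul1r.
  by rewrite -[RHS]hx -hx' expr_div_n.
have -> : ((A * x + B) / (x ^+ 2 + x + d) == y) = (A * x + B == y * (x ^+ 2 + x + d)).
  by apply/eqP/eqP => [<-|->]; [rewrite divfK | rewrite mulfK].
by rewrite -[A * x + B == _]subr_eq0 GRing.subr_pchar2 // addrC.
Qed.

Lemma lin_eq (F : finFieldType) (h : 2 \in [pchar F]) (A B x : F) :
  A != 0 -> (A * x + B == 0) = (x == B / A).
Proof.
move=> hA; rewrite addr_eq0 oppr_pchar2 //.
by apply/eqP/eqP => [<-|->]; [rewrite mulrC mulKf | rewrite mulrC divfK].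
Qed.

Lemma notboth (F : finFieldType) (h : 2 \in [pchar F]) (A B d x : F) :
  A != 0 -> B ^+ 2 / A ^+ 2 + B / A + d != 0 ->
  x ^+ 2 + x + d = 0 -> A * x + B = 0 -> False.
Proof.
move=> hA hD hx /eqP; rewrite lin_eq // => /eqP hx'.
by move/negP: hD; apply; rewrite -expr_div_n -hx' hx.
Qed.

Lemma cnt0 (F : finFieldType) (h : 2 \in [pchar F]) n (hn : (0 < n)%N)
  (hF : #|F| = (2 ^ n)%N) (A B d : F) :
  A != 0 -> B ^+ 2 / A ^+ 2 + B / A + d != 0 ->
  \sum_(x : F) (((A * x + B) / (x ^+ 2 + x + d) == 0)%:R : int) = 2 + chi n d.
Proof.
move=> hA hD.
transitivity (Nsol d + \sum_(x : F) ((x == B / A)%:R : int)); last first.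
  rewrite (Nsol_val h hn hF) sum_ind; move: (chi n d) => z; lia.
rewrite /Nsol -big_split /=.
apply: eq_bigr => x _.
rewrite mulf_eq0 invr_eq0 lin_eq // -(lin_eq h B x hA).
have -> : (x ^+ 2 + x == d) = (x ^+ 2 + x + d == 0) by rewrite addr_eq0 oppr_pchar2.
case: (eqVneq (A * x + B) 0) => h1; case: (eqVneq (x ^+ 2 + x + d) 0) => h2 //=.
- by case: (notboth h hA hD h2 h1).
Qed.

Lemma cntA (F : finFieldType) (h : 2 \in [pchar F]) n (hn : (0 < n)%N)
  (hF : #|F| = (2 ^ n)%N) (A B d : F) :
  A != 0 -> B ^+ 2 / A ^+ 2 + B / A + d != 0 ->
  \sum_(x : F) (((A * x + B) / (x ^+ 2 + x + d) == A)%:R : int) = 1.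
Proof.
move=> hA hD.
pose w := (d + B / A) ^+ (2 ^ n.-1).
have hw : w ^+ 2 = d + B / A.
  by rewrite /w -exprM -expnSr prednK // -hF expf_card.
rewrite -[RHS](sum_ind w); apply: eq_bigr => x _.
rewrite cnt_eq // addrr_pchar2 // mul0r addr0.
have -> : A * x ^+ 2 + (A * d + B) = A * (x + w) ^+ 2.
  by rewrite sqrD2 // hw; field.
by rewrite mulf_eq0 (negbTE hA) expf_eq0 /= addr_eq0 oppr_pchar2.
Qed.

Lemma cnty (F : finFieldType) (h : 2 \in [pchar F]) n (hn : (0 < n)%N)
  (hF : #|F| = (2 ^ n)%N) (A B d y : F) :
  A != 0 -> B ^+ 2 / A ^+ 2 + B / A + d != 0 -> y != 0 -> y != A ->
  \sum_(x : F) (((A * x + B) / (x ^+ 2 + x + d) == y)%:R : int) =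
  1 + chi n (y * (y * d + B) / (y + A) ^+ 2).
Proof.
move=> hA hD hy hyA.
have hyA' : y + A != 0.
  by apply: contra hyA; rewrite addr_eq0 oppr_pchar2.
rewrite -(Nsol_val h hn hF) /Nsol.
pose c := (y + A) / y.
have hc : c != 0 by rewrite /c mulf_neq0 ?invr_eq0.
rewrite (reindex_inj (mulfI hc)) /=; apply: eq_bigr => t _.
rewrite cnt_eq //.
pose e := y * (y * d + B) / (y + A) ^+ 2.
have -> : y * (c * t) ^+ 2 + (y + A) * (c * t) + (y * d + B) =
          ((y + A) ^+ 2 / y) * (t ^+ 2 + t + e).
  by rewrite /c /e; field; rewrite ?hy ?hyA' ?expf_neq0.
rewrite mulf_eq0 mulf_eq0 expf_eq0 /= invr_eq0 (negbTE hy) (negbTE hyA') /=.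
by rewrite addr_eq0 oppr_pchar2.
Qed.

Unset Implicit Arguments.
Unset Strict Implicit.

Theorem lemma4 (F : finFieldType) (n : nat) (A B delta C : F) :
  (0 < n)%N -> #|F| = (2 ^ n)%N ->
  A != 0 -> (B ^+ 2 / A ^+ 2 + B / A + delta != 0) ->
  C ^+ 2 = A * B + A ^+ 2 * delta ->
  let S := \sum_(x : F) chi n ((A * x + B) / (x ^+ 2 + x + delta)) in
  (abstr n delta = 1 ->
     S = chi n A + chi n ((B + C) / A) - kloosterman n (B + C) * chi n A) /\
  (abstr n delta = 0 ->
     S = - chi n A - chi n ((B + C) / A) + kloosterman n (B + C) * chi n A + 2).
Proof.
move=> hn hF hA hD hC S.
have h : 2 \in [pchar F] by apply: (card_finPcharP hF).
pose e (y : F) := y * (y * delta + B) / (y + A) ^+ 2.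
have eA : e A = 0 by rewrite /e addrr_pchar2 // expr0n /= invr0 mulr0.
have e0 : e 0 = 0 by rewrite /e !mul0r.
pose K := kloosterman n (B + C).
have Sg : \sum_(y : F) chi n y * (1 + chi n (e y)) =
          chi n A + chi n (A + delta) * (K - 1).
  under eq_bigr do rewrite mulrDr mulr1 -chiD //.
  rewrite big_split /= sum_chi // add0r (reindex_inj (addIr A)) /=.
  rewrite (bigD1 0) //= add0r eA addr0; congr (_ + _).
  have -> : K - 1 = \sum_(z | z != 0) chi n (z + (B + C) * z^-1).
    rewrite /K -kl // (bigD1 0) //= invr0 mulr0 addr0 chi0.
    by rewrite addrAC subrr add0r.
  rewrite mulr_sumr; apply: eq_bigr => z hz.
  have -> : z + A + e (z + A) =
      (A + delta) + (z + (B + C) * z^-1) + ((C / z) ^+ 2 + C / z).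
    rewrite /e.
    have -> : z + A + A = z by rewrite -addrA addrr_pchar2 // addr0.
    have -> : z + A + (z + A) * ((z + A) * delta + B) / z ^+ 2 =
      (A + delta) + (z + (B + C) * z^-1) + ((C / z) ^+ 2 + C / z)
      + 2%:R * (A * delta / z) - 2%:R * (C / z).
      by rewrite expr_div_n hC; field.
    by rewrite (pcharf0 h) !mul0r addr0 subr0.
  by rewrite !chiD // chi_sqr // chi2 mulr1.
have main : S = chi n delta + chi n (A + delta) * (K - 1).
  rewrite /S (fiber (chi n)) (bigD1 0) //= [X in _ + X](bigD1 A) //=.
  rewrite (cnt0 h hn hF) // (cntA h hn hF) // chi0 mulr1 mul1r.
  move: Sg; rewrite (bigD1 0) //= [X in _ + X](bigD1 A) //= e0 eA chi0 mul1r => Sg.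
  have eq : \sum_(y | (y != 0) && (y != A))
              chi n y * \sum_(x : F) (((A * x + B) / (x ^+ 2 + x + delta) == y)%:R : int) =
            \sum_(y | (y != 0) && (y != A)) chi n y * (1 + chi n (e y)).
    apply: eq_bigr => y /andP [hy0 hyA]; by rewrite (cnty h hn hF).
  rewrite eq; move: Sg.
  move: (\sum_(y | (y != 0) && (y != A)) chi n y * (1 + chi n (e y))) => R.
  move: (chi n A) (chi n delta) (chi n (A + delta) * (K - 1)) => a b c.
  move=> Sg; lia.
have hBC : chi n ((B + C) / A) = chi n delta.
  have -> : (B + C) / A = delta + ((C / A) ^+ 2 + C / A) - 2%:R * delta.
    by rewrite expr_div_n hC; field.
  by rewrite (pcharf0 h) mul0r subr0 chiD // chiD // chi_sqr // chi2 mulr1.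
rewrite -/K main hBC chiD //; split => hd.
  rewrite (chi_abs1 hd); ring.
rewrite (chi_abs0 hd); ring.
Qed.
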